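(* Let $C$ be a self-adjoint positive operator on a separable complex Hilbert space $\mathfrak{h}$ and let $L\in\mathfrak{L}((\mathcal{D}(C),\|\cdot\|_C),\mathfrak{h})$. Then $L\circ\pi_C:(\mathfrak{h},\mathcal{B}(\mathfrak{h}))\to(\mathfrak{h},\mathcal{B}(\mathfrak{h}))$ is measurable.
   Context: $\|x\|_C^2=\|x\|^2+\|Cx\|^2$; $\mathfrak{L}(\mathfrak{X},\mathfrak{Z})$ denotes bounded linear operators; $\pi_C(x)=x$ if $x\in\mathcal{D}(C)$ and $\pi_C(x)=0$ otherwise; $\mathcal{B}(\mathfrak{h})$ is the Borel $\sigma$-algebra. *)

(* Defs.v *)
From HB Require Import structures.
From mathcomp Require Import all_boot all_order all_algebra.
From mathcomp Require Import complex.
From mathcomp Require Import all_classical all_reals all_analysis.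
Import Order.TTheory GRing.Theory Num.Theory.
Local Open Scope ring_scope.
Local Open Scope classical_set_scope.
Local Open Scope complex_scope.
Set Implicit Arguments.
Unset Strict Implicit.

(* A complex Hilbert space is modelled as a complete normed space V over
   R[i] (R a realType) together with an inner product ip inducing the norm.
   Convention: ip is linear in the first argument, conjugate-linear in the
   second. *)

Definition is_inner_product (R : realType) (V : completeNormedModType R[i])
    (ip : V -> V -> R[i]) : Prop :=
  [/\ (forall (a : R[i]) (x y z : V), ip (a *: x + y) z = a * ip x z + ip y z),
      (forall x y : V, ip y x = Num.conj (ip x y)) &
      (forall x : V, `|x| ^+ 2 = ip x x)].

Definition separable_space (T : topologicalType) : Prop :=
  exists u : nat -> T, dense (range u).

Definition subspace (R : realType) (V : completeNormedModType R[i]) (D : set V) : Prop :=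
  D 0 /\ (forall (a : R[i]) (x y : V), D x -> D y -> D (a *: x + y)).

Definition linear_on (R : realType) (V : completeNormedModType R[i]) (D : set V)
    (f : V -> V) : Prop :=
  forall (a : R[i]) (x y : V), D x -> D y -> f (a *: x + y) = a *: f x + f y.

Definition dd_operator (R : realType) (V : completeNormedModType R[i]) (D : set V)
    (C : V -> V) : Prop :=
  [/\ subspace D, dense D & linear_on D C].

Definition adjoint_domain (R : realType) (V : completeNormedModType R[i])
    (ip : V -> V -> R[i]) (D : set V) (C : V -> V) : set V :=
  [set y | exists z : V, forall x, D x -> ip (C x) y = ip x z].

Definition self_adjoint (R : realType) (V : completeNormedModType R[i])
    (ip : V -> V -> R[i]) (D : set V) (C : V -> V) : Prop :=
  [/\ dd_operator D C,
      adjoint_domain ip D C = D &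
      (forall x y, D x -> D y -> ip (C x) y = ip x (C y))].

Definition positive_op (R : realType) (V : completeNormedModType R[i])
    (ip : V -> V -> R[i]) (D : set V) (C : V -> V) : Prop :=
  forall x, D x -> 0 <= ip (C x) x.

Definition graph_norm2 (R : realType) (V : completeNormedModType R[i])
    (C : V -> V) (x : V) : R[i] := `|x| ^+ 2 + `|C x| ^+ 2.

(* L : (D(C), ||.||_C) -> V bounded linear (only values on D matter) *)
Definition bounded_from_graph (R : realType) (V : completeNormedModType R[i])
    (D : set V) (C : V -> V) (L : V -> V) : Prop :=
  linear_on D L /\
  exists M : R[i], 0 <= M /\ forall x, D x -> `|L x| ^+ 2 <= M ^+ 2 * graph_norm2 C x.

Definition pi_dom (R : realType) (V : completeNormedModType R[i]) (D : set V) (x : V) : V :=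
  if pselect (D x) then x else 0.

Definition borel_sets (T : topologicalType) : set (set T) := <<s (@open T) >>.

Definition borel_measurable (T U : topologicalType) (f : T -> U) : Prop :=
  forall B, borel_sets B -> borel_sets (f @^-1` B).

(* Main.v *)
Require Import Defs.
From HB Require Import structures.
From mathcomp Require Import all_boot all_order all_algebra.
From mathcomp Require Import complex.
From mathcomp Require Import all_classical all_reals all_analysis.
From mathcomp Require Import ring lra.
Import Order.TTheory GRing.Theory Num.Theory.
Local Open Scope ring_scope.
Local Open Scope classical_set_scope.
Local Open Scope complex_scope.
Definition Nm {R : realType} {V : completeNormedModType R[i]} (u : V) : R := complex.Re `|u|.
Definition pr {R : realType} {V : completeNormedModType R[i]} (ip : V -> V -> R[i]) (u v : V) : R :=
  complex.Re (ip u v).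

Lemma normE {R : realType} {V : completeNormedModType R[i]} (u : V) : `|u| = (Nm u)%:C.
Proof.
rewrite /Nm RRe_real //; exact: ger0_real.
Qed.

Lemma Nm_ge0 {R : realType} {V : completeNormedModType R[i]} (u : V) : 0 <= Nm u.
Proof. by rewrite -ler0c -normE. Qed.

Lemma Nm_eq0 {R : realType} {V : completeNormedModType R[i]} (u : V) : Nm u = 0 -> u = 0.
Proof. by move=> h; apply/normr0_eq0; rewrite normE h. Qed.

Lemma Nm0 {R : realType} {V : completeNormedModType R[i]} : Nm (0 : V) = 0.
Proof. by rewrite /Nm normr0. Qed.

Lemma NmN {R : realType} {V : completeNormedModType R[i]} (u : V) : Nm (- u) = Nm u.
Proof. by rewrite /Nm normrN. Qed.

Lemma NmB {R : realType} {V : completeNormedModType R[i]} (u v : V) : Nm (u - v) = Nm (v - u).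
Proof. by rewrite /Nm distrC. Qed.

Lemma NmD {R : realType} {V : completeNormedModType R[i]} (u v : V) : Nm (u + v) <= Nm u + Nm v.
Proof. by rewrite -lecR rmorphD /= -!normE ler_normD. Qed.

Lemma NmZ {R : realType} {V : completeNormedModType R[i]} (a : R[i]) (u : V) :
  Nm (a *: u) = complex.Re `|a| * Nm u.
Proof. rewrite /Nm normrZ normE; case: (`|a|) => x y /=; by rewrite mulr0 subr0. Qed.

Lemma NmZr {R : realType} {V : completeNormedModType R[i]} (r : R) (u : V) :
  Nm (r%:C *: u) = `|r| * Nm u.
Proof.
rewrite NmZ; congr (_ * _).
rewrite normc_def /=. by rewrite expr0n /= addr0 sqrtr_sqr.
Qed.

Lemma Nmi {R : realType} {V : completeNormedModType R[i]} (u : V) :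
  Nm ('i *: u) = Nm u.
Proof.
rewrite NmZ normc_def /= expr0n /= add0r expr1n sqrtr1 mul1r //.
Qed.

Lemma ltNm {R : realType} {V : completeNormedModType R[i]} (u : V) (e : R) :
  (`|u| < e%:C) = (Nm u < e).
Proof. by rewrite normE ltcR. Qed.

Lemma complex_ext {R : realType} (z w : R[i]) : complex.Re z = complex.Re w -> complex.Im z = complex.Im w -> z = w.
Proof. by case: z => a b; case: w => c d /= -> ->. Qed.
Lemma ip_lin {R : realType} {V : completeNormedModType R[i]} {ip : V -> V -> R[i]}
  (Hip : is_inner_product ip) a x y z : ip (a *: x + y) z = a * ip x z + ip y z.
Proof. by case: Hip. Qed.

Lemma ip_sym {R : realType} {V : completeNormedModType R[i]} {ip : V -> V -> R[i]}
  (Hip : is_inner_product ip) x y : ip y x = conjc (ip x y).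
Proof. by case: Hip. Qed.

Lemma ip_addl {R : realType} {V : completeNormedModType R[i]} {ip : V -> V -> R[i]}
  (Hip : is_inner_product ip) x y z : ip (x + y) z = ip x z + ip y z.
Proof. by rewrite -{1}[x]scale1r (ip_lin Hip) mul1r. Qed.

Lemma ip_0l {R : realType} {V : completeNormedModType R[i]} {ip : V -> V -> R[i]}
  (Hip : is_inner_product ip) z : ip 0 z = 0.
Proof.
have h := (ip_addl Hip) 0 0 z; rewrite addr0 in h.
by apply: (addrI (ip 0 z)); rewrite addr0 -h.
Qed.

Lemma ip_scalel {R : realType} {V : completeNormedModType R[i]} {ip : V -> V -> R[i]}
  (Hip : is_inner_product ip) a x z : ip (a *: x) z = a * ip x z.
Proof. by rewrite -[a *: x]addr0 (ip_lin Hip) (ip_0l Hip) addr0. Qed.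

Lemma ip_scaler {R : realType} {V : completeNormedModType R[i]} {ip : V -> V -> R[i]}
  (Hip : is_inner_product ip) a x z : ip z (a *: x) = conjc a * ip z x.
Proof. by rewrite (ip_sym Hip) (ip_scalel Hip) rmorphM /= -(ip_sym Hip). Qed.

Lemma ip_oppl {R : realType} {V : completeNormedModType R[i]} {ip : V -> V -> R[i]}
  (Hip : is_inner_product ip) x z : ip (- x) z = - ip x z.
Proof. by rewrite -scaleN1r (ip_scalel Hip) mulN1r. Qed.

Lemma ip_addr {R : realType} {V : completeNormedModType R[i]} {ip : V -> V -> R[i]}
  (Hip : is_inner_product ip) x y z : ip z (x + y) = ip z x + ip z y.
Proof. by rewrite (ip_sym Hip) (ip_addl Hip) rmorphD /= -!(ip_sym Hip). Qed.

Lemma ip_oppr {R : realType} {V : completeNormedModType R[i]} {ip : V -> V -> R[i]}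
  (Hip : is_inner_product ip) x z : ip z (- x) = - ip z x.
Proof. by rewrite (ip_sym Hip) (ip_oppl Hip) rmorphN /= -!(ip_sym Hip). Qed.

Lemma pr_sym {R : realType} {V : completeNormedModType R[i]} {ip : V -> V -> R[i]}
  (Hip : is_inner_product ip) x y : pr ip x y = pr ip y x.
Proof. by rewrite /pr (ip_sym Hip x y); case: (ip x y). Qed.

Lemma pr_addl {R : realType} {V : completeNormedModType R[i]} {ip : V -> V -> R[i]}
  (Hip : is_inner_product ip) x y z : pr ip (x + y) z = pr ip x z + pr ip y z.
Proof. by rewrite /pr (ip_addl Hip); case: (ip x z); case: (ip y z). Qed.

Lemma pr_addr {R : realType} {V : completeNormedModType R[i]} {ip : V -> V -> R[i]}
  (Hip : is_inner_product ip) x y z : pr ip z (x + y) = pr ip z x + pr ip z y.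
Proof. by rewrite /pr (ip_addr Hip); case: (ip z x); case: (ip z y). Qed.

Lemma pr_oppl {R : realType} {V : completeNormedModType R[i]} {ip : V -> V -> R[i]}
  (Hip : is_inner_product ip) x z : pr ip (- x) z = - pr ip x z.
Proof. by rewrite /pr (ip_oppl Hip); case: (ip x z). Qed.

Lemma pr_oppr {R : realType} {V : completeNormedModType R[i]} {ip : V -> V -> R[i]}
  (Hip : is_inner_product ip) x z : pr ip z (- x) = - pr ip z x.
Proof. by rewrite /pr (ip_oppr Hip); case: (ip z x). Qed.

Lemma pr_scalel {R : realType} {V : completeNormedModType R[i]} {ip : V -> V -> R[i]}
  (Hip : is_inner_product ip) (r : R) x z : pr ip (r%:C *: x) z = r * pr ip x z.
Proof. by rewrite /pr (ip_scalel Hip); case: (ip x z) => a b /=; rewrite mul0r subr0. Qed.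

Lemma pr_scaler {R : realType} {V : completeNormedModType R[i]} {ip : V -> V -> R[i]}
  (Hip : is_inner_product ip) (r : R) x z : pr ip z (r%:C *: x) = r * pr ip z x.
Proof. by rewrite (pr_sym Hip) (pr_scalel Hip) pr_sym. Qed.

Lemma pr_0r {R : realType} {V : completeNormedModType R[i]} {ip : V -> V -> R[i]}
  (Hip : is_inner_product ip) z : pr ip z 0 = 0.
Proof. by rewrite (pr_sym Hip) /pr ip_0l. Qed.

Lemma Nm2 {R : realType} {V : completeNormedModType R[i]} {ip : V -> V -> R[i]}
  (Hip : is_inner_product ip) u : Nm u ^+ 2 = pr ip u u.
Proof.
case: Hip => _ _ h; rewrite /pr -h normE.
by rewrite -rmorphXn.
Qed.

Lemma Im_ip {R : realType} {V : completeNormedModType R[i]} {ip : V -> V -> R[i]}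
  (Hip : is_inner_product ip) u w : complex.Im (ip u w) = pr ip u ('i *: w).
Proof.
rewrite /pr (ip_scaler Hip); case: (ip u w) => a b /=.
move=> /=. lra.
Qed.
Definition cv {R : realType} {V : completeNormedModType R[i]} (u : nat -> V) (l : V) :=
  forall e : R, 0 < e -> exists K, forall n, (K <= n)%N -> Nm (u n - l) < e.

Definition cauchyV {R : realType} {V : completeNormedModType R[i]} (u : nat -> V) :=
  forall e : R, 0 < e -> exists K, forall n m, (K <= n)%N -> (K <= m)%N -> Nm (u n - u m) < e.

Lemma pos_complex {R : realType} (e : R[i]) : 0 < e -> e = (complex.Re e)%:C /\ 0 < complex.Re e.
Proof.
case: e => a b; rewrite ltcE /= => /andP[/eqP hb ha].
split => //. by rewrite hb.
Qed.

Lemma near_oo_ex (P : nat -> Prop) : (exists K, forall n, (K <= n)%N -> P n) -> \forall n \near \oo, P n.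
Proof. by case=> K hK; exists K => // n /= /hK. Qed.

Lemma near_oo_ex' (P : nat -> Prop) : (\forall n \near \oo, P n) -> exists K, forall n, (K <= n)%N -> P n.
Proof. by case=> K _ hK; exists K => n hn; apply: hK. Qed.

Lemma complete_seq {R : realType} {V : completeNormedModType R[i]} (u : nat -> V) :
  cauchyV u -> exists l, cv u l.
Proof.
move=> hu.
have hc : cauchy (u @ \oo).
  apply: cauchy_exP => eps /pos_complex [-> he].
  have [K hK] := hu _ he; exists (u K).
  apply: near_oo_ex; exists K => n hn /=.
  rewrite -ball_normE /= ltNm; exact: hK.
have hcv : cvgn u by apply: cauchy_cvg.
exists (lim (u @ \oo)) => e he.
have := (@cvgrPdist_lt _ _ _ _ _ u _).1 hcv e%:C; rewrite ltcR => /(_ _ he) /near_oo_ex' [K hK].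
exists K => n /hK; by rewrite NmB ltNm.
Qed.
Lemma NmD2 {R : realType} {V : completeNormedModType R[i]} {ip : V -> V -> R[i]}
  (Hip : is_inner_product ip) u v :
  Nm (u + v) ^+ 2 = Nm u ^+ 2 + 2 * pr ip u v + Nm v ^+ 2.
Proof.
rewrite !(Nm2 Hip) (pr_addl Hip) !(pr_addr Hip) (pr_sym Hip v u).
lra.
Qed.

Lemma NmB2 {R : realType} {V : completeNormedModType R[i]} {ip : V -> V -> R[i]}
  (Hip : is_inner_product ip) u v :
  Nm (u - v) ^+ 2 = Nm u ^+ 2 - 2 * pr ip u v + Nm v ^+ 2.
Proof. by rewrite (NmD2 Hip) (pr_oppr Hip) NmN mulrN. Qed.

Lemma pr_le {R : realType} {V : completeNormedModType R[i]} {ip : V -> V -> R[i]}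
  (Hip : is_inner_product ip) u v :
  2 * pr ip u v <= Nm u ^+ 2 + Nm v ^+ 2.
Proof.
have := sqr_ge0 (Nm (u - v)); rewrite (NmB2 Hip). lra.
Qed.

Lemma pr_bound {R : realType} {V : completeNormedModType R[i]} {ip : V -> V -> R[i]}
  (Hip : is_inner_product ip) u w :
  `|pr ip u w| <= Nm w * (Nm u ^+ 2 + 1).
Proof.
have [w0|wn0] := eqVneq w 0.
  by rewrite w0 (pr_0r Hip) normr0 Nm0 mul0r.
have tpos : 0 < Nm w.
  rewrite lt_neqAle Nm_ge0 andbT; apply/eqP => h; move/eqP: wn0; apply; exact: Nm_eq0.
set t := Nm w.
have h1 := pr_le Hip (t%:C *: u) w.
have h2 := pr_le Hip (t%:C *: u) (- w).
rewrite NmZr NmN (pr_oppr Hip) (pr_scalel Hip) in h1 h2.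
rewrite ger0_norm in h1 h2; last exact: ltW.
have hu := Nm_ge0 u.
rewrite -/t in h1 h2.
have key : 2 * `|pr ip u w| <= t * (Nm u ^+ 2 + 1).
  have [hp|hp] := lerP 0 (pr ip u w).
    rewrite ger0_norm //. nra.
  rewrite ltr0_norm //. nra.
have hn := normr_ge0 (pr ip u w).
nra.
Qed.

Definition cvR {R : realType} (a : nat -> R) (l : R) :=
  forall e : R, 0 < e -> exists K, forall n, (K <= n)%N -> `|a n - l| < e.

Lemma cvR_unique {R : realType} (a : nat -> R) l l' : cvR a l -> cvR a l' -> l = l'.
Proof.
move=> h h'; apply/eqP; rewrite -subr_eq0 -normr_eq0; apply/eqP.
apply/le_anti; rewrite normr_ge0 andbT.
apply/ler_addgt0Pr => e he; rewrite add0r.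
have he2 : 0 < e / 2 by rewrite divr_gt0.
have [K hK] := h _ he2; have [K' hK'] := h' _ he2.
have := hK (maxn K K') (leq_maxl _ _); have := hK' (maxn K K') (leq_maxr _ _).
set x := a _ => h1 h2.
have H := ler_normB (x - l') (x - l).
have E : (x - l') - (x - l) = l - l' by rewrite opprB addrC addrA subrK.
rewrite E in H.
lra.
Qed.

Lemma cv_unique {R : realType} {V : completeNormedModType R[i]} (u : nat -> V) l l' :
  cv u l -> cv u l' -> l = l'.
Proof.
move=> h h'; apply/eqP; rewrite -subr_eq0; apply/eqP; apply: Nm_eq0.
apply/le_anti; rewrite Nm_ge0 andbT.
apply/ler_addgt0Pr => e he; rewrite add0r.
have he2 : 0 < e / 2 by rewrite divr_gt0.
have [K hK] := h _ he2; have [K' hK'] := h' _ he2.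
have := hK (maxn K K') (leq_maxl _ _); have := hK' (maxn K K') (leq_maxr _ _).
set x := u _ => h1 h2.
have : Nm (l - l') <= Nm (x - l) + Nm (x - l').
  have -> : l - l' = (x - l') + - (x - l) by rewrite opprB [RHS]addrC addrA subrK.
  by rewrite [X in _ <= X]addrC -(NmN (x - l)); apply: NmD.
lra.
Qed.

Lemma cv_pr {R : realType} {V : completeNormedModType R[i]} {ip : V -> V -> R[i]}
  (Hip : is_inner_product ip) u (v : nat -> V) l :
  cv v l -> cvR (fun n => pr ip u (v n)) (pr ip u l).
Proof.
move=> h e he.
have hc : 0 < Nm u ^+ 2 + 1 by have := sqr_ge0 (Nm u); lra.
have [K hK] := h (e / (Nm u ^+ 2 + 1)) (divr_gt0 he hc).
exists K => n /hK hn.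
rewrite -(pr_oppr Hip) -(pr_addr Hip).
apply: le_lt_trans (pr_bound Hip u (v n - l)) _.
by rewrite -ltr_pdivlMr.
Qed.

Lemma cv_pr_l {R : realType} {V : completeNormedModType R[i]} {ip : V -> V -> R[i]}
  (Hip : is_inner_product ip) u (v : nat -> V) l :
  cv v l -> cvR (fun n => pr ip (v n) u) (pr ip l u).
Proof.
move=> h; have := cv_pr Hip u _ _ h.
by rewrite (pr_sym Hip); under eq_fun do rewrite (pr_sym Hip).
Qed.

Lemma cv_scale_i {R : realType} {V : completeNormedModType R[i]} (v : nat -> V) l :
  cv v l -> cv (fun n => 'i *: v n) ('i *: l).
Proof.
move=> h e /h [K hK]; exists K => n /hK; by rewrite -scalerBr Nmi.
Qed.

Lemma dense_pt {R : realType} {V : completeNormedModType R[i]} (D : set V) :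
  dense D -> forall x (e : R), 0 < e -> exists y, D y /\ Nm (y - x) < e.
Proof.
move=> hD x e he.
have [y [hy1 hy2]] : (ball x e%:C `&` D) !=set0.
  apply: hD; first by exists x; apply: ballxx; rewrite ltcR.
  exact: ball_open.
exists y; split => //; move: hy1; rewrite -ball_normE /= NmB ltNm //.
Qed.

Lemma inv_small {R : realType} (e : R) : 0 < e -> exists K, forall n, (K <= n)%N -> n.+1%:R^-1 < e.
Proof. move=> he; have := near_infty_natSinv_lt (PosNum he); move/near_oo_ex' => [K hK]; by exists K. Qed.

Lemma dense_seq {R : realType} {V : completeNormedModType R[i]} (D : set V) :
  dense D -> forall x, exists y : nat -> V, (forall n, D (y n)) /\ cv y x.
Proof.
move=> hD x.
have h : forall n : nat, exists y, D y /\ Nm (y - x) < n.+1%:R^-1.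
  move=> n; apply: dense_pt => //; rewrite invr_gt0 ltr0n //.
have [y hy] := choice h.
exists y; split => [n|]; first by case: (hy n).
move=> e /inv_small [K hK]; exists K => n hn.
case: (hy n) => _ h1; exact: lt_trans h1 (hK n hn).
Qed.
Lemma cvR_const {R : realType} (c : R) : cvR (fun _ => c) c.
Proof. by move=> e he; exists 0%N => n _; rewrite subrr normr0. Qed.

Lemma cvR_ext {R : realType} (a b : nat -> R) l : (forall n, a n = b n) -> cvR a l -> cvR b l.
Proof. by move=> hab h e /h [K hK]; exists K => n /hK; rewrite hab. Qed.

Lemma sub_lin {R : realType} {V : completeNormedModType R[i]} {D : set V} :
  Defs.subspace D -> forall a x y, D x -> D y -> D (a *: x + y).
Proof. by move=> [h0 h]. Qed.

Lemma sub_0 {R : realType} {V : completeNormedModType R[i]} {D : set V} :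
  Defs.subspace D -> D 0.
Proof. by move=> [h0 h]. Qed.

Lemma sub_scale {R : realType} {V : completeNormedModType R[i]} {D : set V} (hD : Defs.subspace D) a x :
  D x -> D (a *: x).
Proof. by move=> hx; rewrite -[_ *: _]addr0; apply: (sub_lin hD) => //; exact: sub_0. Qed.

Lemma sub_add {R : realType} {V : completeNormedModType R[i]} {D : set V} (hD : Defs.subspace D) x y :
  D x -> D y -> D (x + y).
Proof. by move=> hx hy; rewrite -[x]scale1r; apply: (sub_lin hD). Qed.

Lemma sub_opp {R : realType} {V : completeNormedModType R[i]} {D : set V} (hD : Defs.subspace D) x :
  D x -> D (- x).
Proof. by move=> hx; rewrite -scaleN1r; apply: sub_scale. Qed.

Lemma sub_sub {R : realType} {V : completeNormedModType R[i]} {D : set V} (hD : Defs.subspace D) x y :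
  D x -> D y -> D (x - y).
Proof. by move=> hx hy; apply: sub_add => //; apply: sub_opp. Qed.

Lemma lin_0 {R : realType} {V : completeNormedModType R[i]} {D : set V} {C : V -> V} :
  Defs.subspace D -> linear_on D C -> C 0 = 0.
Proof.
move=> hD hC; have := hC (-1) 0 0 (sub_0 hD) (sub_0 hD).
by rewrite scaler0 addr0 scaleN1r addNr.
Qed.

Lemma lin_add {R : realType} {V : completeNormedModType R[i]} {D : set V} {C : V -> V} :
  Defs.subspace D -> linear_on D C -> forall x y, D x -> D y -> C (x + y) = C x + C y.
Proof. by move=> hD hC x y hx hy; have := hC 1 x y hx hy; rewrite !scale1r. Qed.

Lemma lin_scale {R : realType} {V : completeNormedModType R[i]} {D : set V} {C : V -> V} :
  Defs.subspace D -> linear_on D C -> forall a x, D x -> C (a *: x) = a *: C x.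
Proof.
move=> hD hC a x hx; have := hC a x 0 hx (sub_0 hD).
by rewrite !addr0 (lin_0 hD hC) addr0.
Qed.

Lemma lin_opp {R : realType} {V : completeNormedModType R[i]} {D : set V} {C : V -> V} :
  Defs.subspace D -> linear_on D C -> forall x, D x -> C (- x) = - C x.
Proof. by move=> hD hC x hx; rewrite -scaleN1r (lin_scale hD hC) // scaleN1r. Qed.

Lemma lin_sub {R : realType} {V : completeNormedModType R[i]} {D : set V} {C : V -> V} :
  Defs.subspace D -> linear_on D C -> forall x y, D x -> D y -> C (x - y) = C x - C y.
Proof.
move=> hD hC x y hx hy.
by rewrite (lin_add hD hC) ?(lin_opp hD hC) //; apply: sub_opp.
Qed.

Lemma C_closed {R : realType} {V : completeNormedModType R[i]} {ip : V -> V -> R[i]}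
  (Hip : is_inner_product ip) {D : set V} {C : V -> V} (HCsa : self_adjoint ip D C)
  (y : nat -> V) x z :
  (forall n, D (y n)) -> cv y x -> cv (fun n => C (y n)) z -> D x /\ C x = z.
Proof.
case: HCsa => [[hsub hdense hlin] hadj hsym] hy hyx hCy.
have key : forall w, D w -> ip (C w) x = ip w z.
  move=> w hw; apply: complex_ext.
    apply: (@cvR_unique _ (fun n => pr ip (C w) (y n))).
      exact: cv_pr.
    apply: (@cvR_ext _ (fun n => pr ip w (C (y n)))).
      by move=> n; rewrite /pr hsym.
    exact: cv_pr.
  rewrite !(Im_ip Hip).
  apply: (@cvR_unique _ (fun n => pr ip (C w) ('i *: y n))).
    apply: cv_pr => //; exact: cv_scale_i.
  apply: (@cvR_ext _ (fun n => pr ip w ('i *: C (y n)))).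
    by move=> n; rewrite -!(Im_ip Hip) hsym.
  apply: cv_pr => //; exact: cv_scale_i.
have Dx : D x.
  by rewrite -hadj; exists z.
split => //.
set d := C x - z.
have hd : forall w, D w -> pr ip w d = 0.
  move=> w hw; rewrite /d (pr_addr Hip) (pr_oppr Hip) /pr -hsym // key //.
  by rewrite subrr.
have [w [hw hwd]] := dense_seq _ hdense d.
have : pr ip d d = 0.
  apply: (@cvR_unique _ (fun n => pr ip (w n) d)); last first.
    apply: (@cvR_ext _ (fun _ => 0)); last exact: cvR_const.
    by move=> n; rewrite hd.
  exact: cv_pr_l.
rewrite -(Nm2 Hip) => /eqP; rewrite sqrf_eq0 => /eqP /Nm_eq0 /eqP.
by rewrite subr_eq0 => /eqP.
Qed.
Lemma sa_sub {R : realType} {V : completeNormedModType R[i]} {ip : V -> V -> R[i]}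
  {D : set V} {C : V -> V} (HCsa : self_adjoint ip D C) : Defs.subspace D.
Proof. by case: HCsa => [[]]. Qed.

Lemma sa_lin {R : realType} {V : completeNormedModType R[i]} {ip : V -> V -> R[i]}
  {D : set V} {C : V -> V} (HCsa : self_adjoint ip D C) : linear_on D C.
Proof. by case: HCsa => [[]]. Qed.

Lemma sa_dense {R : realType} {V : completeNormedModType R[i]} {ip : V -> V -> R[i]}
  {D : set V} {C : V -> V} (HCsa : self_adjoint ip D C) : dense D.
Proof. by case: HCsa => [[]]. Qed.

Definition J {R : realType} {V : completeNormedModType R[i]} (C : V -> V) (s : R) (x y : V) : R :=
  Nm (y - x) ^+ 2 + s * Nm (C y) ^+ 2.

Lemma JE {R : realType} {V : completeNormedModType R[i]} {ip : V -> V -> R[i]}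
  (Hip : is_inner_product ip) {D : set V} {C : V -> V} (HCsa : self_adjoint ip D C)
  s x a v : D a -> D v ->
  J C s x (a + v) = J C s x a + 2 * (pr ip (a - x) v + s * pr ip (C a) (C v))
     + (Nm v ^+ 2 + s * Nm (C v) ^+ 2).
Proof.
move=> ha hv; rewrite /J (lin_add (sa_sub HCsa) (sa_lin HCsa)) //.
have -> : a + v - x = (a - x) + v by rewrite addrAC.
rewrite !(NmD2 Hip). ring.
Qed.

Lemma Jpm {R : realType} {V : completeNormedModType R[i]} {ip : V -> V -> R[i]}
  (Hip : is_inner_product ip) {D : set V} {C : V -> V} (HCsa : self_adjoint ip D C)
  s x a h : D a -> D h ->
  J C s x (a + h) + J C s x (a - h) = 2 * J C s x a + 2 * (Nm h ^+ 2 + s * Nm (C h) ^+ 2).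
Proof.
move=> ha hh.
have hs := sa_sub HCsa.
rewrite !(JE Hip HCsa) //; last exact: sub_opp.
rewrite (lin_opp hs (sa_lin HCsa)) // !(pr_oppr Hip) !NmN. ring.
Qed.

Lemma J_ge0 {R : realType} {V : completeNormedModType R[i]} (C : V -> V) s x y :
  0 <= s -> 0 <= J C s x y.
Proof.
move=> hs; rewrite /J; apply: addr_ge0; first exact: sqr_ge0.
by apply: mulr_ge0 => //; apply: sqr_ge0.
Qed.
Lemma invS_le {R : realType} {K n : nat} : (K <= n)%N -> (n.+1%:R^-1 : R) <= K.+1%:R^-1.
Proof.
move=> hKn; rewrite lef_pV2 ?posrE ?ltr0n // ler_nat; by rewrite ltnS.
Qed.

Lemma sq_lt {R : realType} (a e : R) : 0 <= a -> 0 < e -> a ^+ 2 < e ^+ 2 -> a < e.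
Proof. move=> ha he h; case: (lerP e a) => // hea; nra. Qed.

Lemma cv_pr0 {R : realType} {V : completeNormedModType R[i]} {ip : V -> V -> R[i]}
  (Hip : is_inner_product ip) u (v : nat -> V) l :
  cv v l -> forall e, 0 < e -> exists K, forall n, (K <= n)%N -> `|pr ip u (v n - l)| < e.
Proof.
move=> h e he; have [K hK] := cv_pr Hip u _ _ h e he.
by exists K => n /hK; rewrite (pr_addr Hip) (pr_oppr Hip).
Qed.

Lemma lin_aux {R : realType} {J1 J2 J3 m0 a b A sB : R} :
 J1 < m0 + a -> J2 < m0 + b -> m0 <= J3 -> J2 + J1 = 2 * J3 + 2 * (4^-1 * A + 4^-1 * sB) ->
 A + sB <= 2 * (b + a).
Proof. move=> *; lra. Qed.

Lemma exists_min {R : realType} {V : completeNormedModType R[i]} {ip : V -> V -> R[i]}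
  (Hip : is_inner_product ip) {D : set V} {C : V -> V} (HCsa : self_adjoint ip D C)
  (s : R) (x : V) : 0 < s ->
  exists a, D a /\ forall y, D y -> J C s x a <= J C s x y.
Proof.
move=> hs.
have hsub := sa_sub HCsa; have hlin := sa_lin HCsa.
set S := [set r | exists y, D y /\ r = J C s x y].
have hS0 : S (J C s x 0) by exists 0; split => //; exact: sub_0 hsub.
have hlb : forall r, S r -> 0 <= r.
  by move=> r [y [_ ->]]; apply: J_ge0; apply: ltW.
have hinf : has_inf S.
  split; first by exists (J C s x 0).
  by exists 0 => r /hlb.
set m0 := inf S.
have hm0 : forall y, D y -> m0 <= J C s x y.
  move=> y hy; apply: (ge_inf hinf.2); by exists y.
have hadh : forall n : nat, exists y, D y /\ J C s x y < m0 + n.+1%:R^-1.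
  move=> n; have hpos : (0 : R) < n.+1%:R^-1 by rewrite invr_gt0 ltr0n.
  have [r [y [hy ->]] hr] := inf_adherent hpos hinf.
  by exists y.
have [y hy] := choice hadh.
have hyD : forall n, D (y n) by move=> n; case: (hy n).
have hyJ : forall n, J C s x (y n) < m0 + n.+1%:R^-1 by move=> n; case: (hy n).
have half : ((2^-1 : R) + 2^-1) = 1 by lra.
have bound : forall n k, Nm (y n - y k) ^+ 2 + s * Nm (C (y n) - C (y k)) ^+ 2
                 <= 2 * (n.+1%:R^-1 + k.+1%:R^-1).
  move=> n k.
  set d := y n - y k.
  have hd : D d by apply: sub_sub.
  set h := (2^-1 : R)%:C *: d.
  have hh : D h by apply: sub_scale.
  have ha : D (y k + h) by apply: sub_add.
  have e1 : y k + h + h = y n.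
    rewrite -addrA /h -scalerDl -rmorphD /= half scale1r /d addrC subrK //.
  have e2 : y k + h - h = y k by rewrite addrK.
  have := Jpm Hip HCsa s x (y k + h) h ha hh; rewrite e1 e2.
  have -> : C h = (2^-1 : R)%:C *: (C (y n) - C (y k)).
    by rewrite /h (lin_scale hsub hlin) // /d (lin_sub hsub hlin).
  rewrite !NmZr ger0_norm ?invr_ge0 ?ler0n // /d.
  have := hm0 _ ha; have := hyJ n; have := hyJ k.
  rewrite !exprMn.
  move=> h1 h2 h3 h4.
  have i4 : (2^-1 : R) ^+ 2 = 4^-1 by rewrite expr2; lra.
  rewrite i4 in h4.
  set A := Nm (y n - y k) ^+ 2 in h4 *.
  set B := Nm (C (y n) - C (y k)) ^+ 2 in h4 *.
  rewrite [s * (4^-1 * B)](_ : _ = 4^-1 * (s * B)) in h4; last by ring.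
  set sB := s * B in h4 *.
  move: h1 h2 h3 h4; set J1 := J C s x (y k); set J2 := J C s x (y n); set J3 := J C s x (y k + h).
  move=> h1 h2 h3 h4.
  exact: (lin_aux h1 h2 h3 h4).
have cy : cauchyV y.
  move=> e he.
  have [K hK] := inv_small (e ^+ 2 / 4) (divr_gt0 (exprn_gt0 2 he) (ltr0n _ 4)).
  exists K => n k hn hk; apply: sq_lt => //; first exact: Nm_ge0.
  have := bound n k; have := invS_le (R:=R) hn; have := invS_le (R:=R) hk; have := hK K (leqnn K).
  have := mulr_ge0 (ltW hs) (sqr_ge0 (Nm (C (y n) - C (y k)))).
  move: (n.+1%:R^-1 : R) (k.+1%:R^-1 : R) (K.+1%:R^-1 : R) => a b c.
  move=> *; lra.
have cCy : cauchyV (fun n => C (y n)).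
  move=> e he.
  have [K hK] := inv_small (s * e ^+ 2 / 4) (divr_gt0 (mulr_gt0 hs (exprn_gt0 2 he)) (ltr0n _ 4)).
  exists K => n k hn hk; apply: sq_lt => //; first exact: Nm_ge0.
  have := bound n k; have := invS_le (R:=R) hn; have := invS_le (R:=R) hk; have := hK K (leqnn K).
  have := sqr_ge0 (Nm (y n - y k)).
  move: (n.+1%:R^-1 : R) (k.+1%:R^-1 : R) (K.+1%:R^-1 : R) => a b c.
  move=> h1 h2 h3 h4 h5.
  have : s * Nm (C (y n) - C (y k)) ^+ 2 < s * e ^+ 2 by lra.
  by rewrite ltr_pM2l.
have [a ha] := complete_seq _ cy.
have [z hz] := complete_seq _ cCy.
have [Da Caz] := C_closed Hip HCsa _ _ _ hyD ha hz.
exists a; split => //.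
have Jam : J C s x a <= m0.
  apply/ler_addgt0Pr => e he.
  have [K1 hK1] := cv_pr0 Hip (a - x) _ _ ha (e / 8) (divr_gt0 he (ltr0n _ 8)).
  have [K2 hK2] := cv_pr0 Hip z _ _ hz (e / (8 * s)) (divr_gt0 he (mulr_gt0 (ltr0n _ 8) hs)).
  have [K3 hK3] := inv_small (e / 2) (divr_gt0 he (ltr0n _ 2)).
  set n := maxn K1 (maxn K2 K3).
  have hn1 : (K1 <= n)%N by rewrite leq_maxl.
  have hn2 : (K2 <= n)%N by rewrite /n (leq_trans _ (leq_maxr _ _)) ?leq_maxl.
  have hn3 : (K3 <= n)%N by rewrite /n (leq_trans _ (leq_maxr _ _)) ?leq_maxr.
  have hv : D (y n - a) by apply: sub_sub.
  have := JE Hip HCsa s x a (y n - a) Da hv.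
  rewrite addrC subrK (lin_sub hsub hlin) // Caz.
  have := hK1 n hn1; have := hK2 n hn2; have := hK3 n hn3; have := hyJ n.
  have := sqr_ge0 (Nm (y n - a)).
  have := mulr_ge0 (ltW hs) (sqr_ge0 (Nm (C (y n) - z))).
  set p1 := pr ip (a - x) (y n - a).
  set p2 := pr ip z (C (y n) - z).
  move=> g1 g2 g3 g4 g5 g6 g7.
  have q2 : `|s * p2| < e / 8.
    rewrite normrM gtr0_norm //.
    move: g5; rewrite ltr_pdivlMr ?mulr_gt0 // => g5.
    rewrite ltr_pdivlMr //; move: g5; set q := `|p2|; move=> g5; nra.
  move: g6 q2; rewrite !ltr_norml => /andP [q1a q1b] /andP [q2a q2b].
  move: g3 g4 g7 q1a q2a g1 g2.
  move: (n.+1%:R^-1 : R) => c.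
  move=> *; lra.
move=> w hw; exact: le_trans Jam (hm0 w hw).
Qed.
Lemma EL {R : realType} {V : completeNormedModType R[i]} {ip : V -> V -> R[i]}
  (Hip : is_inner_product ip) {D : set V} {C : V -> V} (HCsa : self_adjoint ip D C)
  {s : R} {x a : V} : 0 < s -> D a -> (forall y, D y -> J C s x a <= J C s x y) ->
  forall v, D v -> pr ip (a - x) v + s * pr ip (C a) (C v) = 0.
Proof.
move=> hs Da hmin v Dv.
have hsub := sa_sub HCsa; have hlin := sa_lin HCsa.
set B := pr ip (a - x) v + s * pr ip (C a) (C v).
set Q := Nm v ^+ 2 + s * Nm (C v) ^+ 2.
have hQ : 0 <= Q.
  apply: addr_ge0; first exact: sqr_ge0.
  by apply: mulr_ge0; [exact: ltW | exact: sqr_ge0].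
set t := - B / (Q + 1).
have ht : t * (Q + 1) = - B.
  rewrite /t mulrVK //; rewrite unitfE; apply/eqP => h; move: hQ; lra.
have Dw : D (t%:C *: v) by apply: sub_scale.
have := hmin _ (sub_add hsub _ _ Da Dw).
rewrite (JE Hip HCsa s x a (t%:C *: v) Da Dw) (lin_scale hsub hlin) // !(pr_scaler Hip) !NmZr.
rewrite !exprMn -!normrX !ger0_norm ?sqr_ge0 //.
move=> h.
have h2 : 0 <= 2 * t * B + t ^+ 2 * Q.
  move: h; rewrite /B /Q. move: (pr ip (a - x) v) (pr ip (C a) (C v)) (Nm v ^+ 2) (Nm (C v) ^+ 2) => p q m k.
  move=> h; nra.
have h3 : t ^+ 2 * (Q + 2) <= 0.
  have hB : B = - (t * (Q + 1)) by rewrite ht opprK.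
  rewrite hB in h2. nra.
have : t = 0.
  have ht2 : 0 <= t ^+ 2 by exact: sqr_ge0.
  have : t ^+ 2 = 0 by nra.
  by move/eqP; rewrite sqrf_eq0 => /eqP.
move=> t0; move: ht; rewrite t0 mul0r => /eqP; rewrite eq_sym oppr_eq0 => /eqP //.
Qed.
Lemma Jid {R : realType} {V : completeNormedModType R[i]} {ip : V -> V -> R[i]}
  (Hip : is_inner_product ip) {D : set V} {C : V -> V} (HCsa : self_adjoint ip D C)
  {s : R} {x a : V} : 0 < s -> D a -> (forall y, D y -> J C s x a <= J C s x y) ->
  forall y, D y -> J C s x y = J C s x a + Nm (y - a) ^+ 2 + s * Nm (C y - C a) ^+ 2.
Proof.
move=> hs Da hmin y Dy.
have hsub := sa_sub HCsa; have hlin := sa_lin HCsa.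
have Dv : D (y - a) by apply: sub_sub.
have := JE Hip HCsa s x a (y - a) Da Dv.
rewrite addrC subrK (EL Hip HCsa hs Da hmin _ Dv) mulr0 addr0 (lin_sub hsub hlin) //.
by move=> ->; rewrite addrA.
Qed.

Definition amin {R : realType} {V : completeNormedModType R[i]} (D : set V) (C : V -> V)
  (s : R) (x : V) : V :=
  xget 0 [set a | D a /\ forall y, D y -> J C s x a <= J C s x y].

Lemma aminP {R : realType} {V : completeNormedModType R[i]} {ip : V -> V -> R[i]}
  (Hip : is_inner_product ip) {D : set V} {C : V -> V} (HCsa : self_adjoint ip D C)
  (s : R) (x : V) : 0 < s ->
  D (amin D C s x) /\ forall y, D y -> J C s x (amin D C s x) <= J C s x y.
Proof.
move=> hs; have := @xgetPex _ 0 [set a | D a /\ forall y, D y -> J C s x a <= J C s x y].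
by move=> /(_ (exists_min Hip HCsa s x hs)).
Qed.

Lemma amin_lip {R : realType} {V : completeNormedModType R[i]} {ip : V -> V -> R[i]}
  (Hip : is_inner_product ip) {D : set V} {C : V -> V} (HCsa : self_adjoint ip D C)
  (s : R) (x x' : V) : 0 < s ->
  Nm (amin D C s x - amin D C s x') ^+ 2
   + 2 * s * Nm (C (amin D C s x) - C (amin D C s x')) ^+ 2 <= Nm (x - x') ^+ 2.
Proof.
move=> hs.
have hsub := sa_sub HCsa; have hlin := sa_lin HCsa.
have [Da ha] := aminP Hip HCsa s x hs.
have [Da' ha'] := aminP Hip HCsa s x' hs.
set a := amin D C s x in Da ha *; set a' := amin D C s x' in Da' ha' *.
have De : D (a - a') by apply: sub_sub.
have e1 := EL Hip HCsa hs Da ha _ De.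
have e2 := EL Hip HCsa hs Da' ha' _ De.
have key : pr ip (a - a') (a - a') - pr ip (x - x') (a - a')
   + s * pr ip (C (a - a')) (C (a - a')) = 0.
  rewrite (lin_sub hsub hlin) // in e1 e2 *.
  move: e1 e2; rewrite !(pr_addl Hip) !(pr_oppl Hip) => e1 e2; lra.
have hle := pr_le Hip (x - x') (a - a').
rewrite -!(Nm2 Hip) (lin_sub hsub hlin) // in key.
move: key hle; set A := Nm (a - a') ^+ 2; set B := Nm (C a - C a') ^+ 2.
set W := Nm (x - x') ^+ 2; set p := pr ip (x - x') (a - a').
move=> *; lra.
Qed.
Definition an {R : realType} {V : completeNormedModType R[i]} (D : set V) (C : V -> V)
  (n : nat) (x : V) : V := amin D C (n.+1%:R^-1 : R) x.

Lemma sn_pos {R : realType} (n : nat) : 0 < (n.+1%:R^-1 : R).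
Proof. by rewrite invr_gt0 ltr0n. Qed.

Lemma anP {R : realType} {V : completeNormedModType R[i]} {ip : V -> V -> R[i]}
  (Hip : is_inner_product ip) {D : set V} {C : V -> V} (HCsa : self_adjoint ip D C) n x :
  D (an D C n x) /\ forall y, D y -> J C n.+1%:R^-1 x (an D C n x) <= J C n.+1%:R^-1 x y.
Proof. exact: (aminP Hip HCsa _ x (sn_pos n)). Qed.

Lemma an_cv {R : realType} {V : completeNormedModType R[i]} {ip : V -> V -> R[i]}
  (Hip : is_inner_product ip) {D : set V} {C : V -> V} (HCsa : self_adjoint ip D C) x :
  cv (fun n => an D C n x) x.
Proof.
move=> e he.
have he2 : 0 < e / 2 by rewrite divr_gt0.
have [y [Dy hy]] := dense_pt _ (sa_dense HCsa) x _ he2.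
set c := Nm (C y) ^+ 2.
have hc : 0 <= c by exact: sqr_ge0.
have hpos : 0 < e ^+ 2 / (2 * (c + 1)).
  by apply: divr_gt0; [exact: exprn_gt0 | lra].
have [K hK] := inv_small _ hpos.
exists K => n hn.
have [Da hmin] := anP Hip HCsa n x.
have := hmin y Dy; rewrite /J.
have := hK n hn; rewrite ltr_pdivlMr; last lra.
have := sqr_ge0 (Nm (C (an D C n x))); have := sn_pos (R:=R) n.
have hy2 : Nm (y - x) ^+ 2 < e ^+ 2 / 4.
  have := Nm_ge0 (y - x); move: hy; set q := Nm (y - x); move=> *; nra.
move: hy2; rewrite -/c.
move: (n.+1%:R^-1 : R) => t; move: (Nm (C (an D C n x)) ^+ 2) => b.
move=> h1 h2 h3 h4 h5.
apply: sq_lt => //; first exact: Nm_ge0.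
have := mulr_ge0 (ltW h2) h3.
clearbody c; move=> *; nra.
Qed.

Lemma an_boundD {R : realType} {V : completeNormedModType R[i]} {ip : V -> V -> R[i]}
  (Hip : is_inner_product ip) {D : set V} {C : V -> V} (HCsa : self_adjoint ip D C) n x :
  D x -> Nm (C (an D C n x)) <= Nm (C x).
Proof.
move=> Dx.
have [Da hmin] := anP Hip HCsa n x.
have := hmin x Dx; rewrite /J subrr Nm0 expr0n /= add0r.
have := sqr_ge0 (Nm (an D C n x - x)); have := sn_pos (R:=R) n.
move: (n.+1%:R^-1 : R) => t ht h0 h.
have : Nm (C (an D C n x)) ^+ 2 <= Nm (C x) ^+ 2.
  rewrite -(ler_pM2l ht); lra.
by rewrite ler_sqr ?nnegrE ?Nm_ge0.
Qed.

Lemma an_mono {R : realType} {V : completeNormedModType R[i]} {ip : V -> V -> R[i]}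
  (Hip : is_inner_product ip) {D : set V} {C : V -> V} (HCsa : self_adjoint ip D C) n m x :
  (n <= m)%N ->
  Nm (C (an D C m x) - C (an D C n x)) ^+ 2 <=
    Nm (C (an D C m x)) ^+ 2 - Nm (C (an D C n x)) ^+ 2.
Proof.
rewrite leq_eqVlt => /orP [/eqP ->|hnm]; first by rewrite !subrr Nm0 expr0n.
have [Ds hs] := anP Hip HCsa m x.
have [Dr hr] := anP Hip HCsa n x.
have e1 := Jid Hip HCsa (sn_pos m) Ds hs _ Dr.
have e2 := Jid Hip HCsa (sn_pos n) Dr hr _ Ds.
have hsr : (m.+1%:R^-1 : R) < n.+1%:R^-1.
  by rewrite ltf_pV2 ?posrE ?ltr0n // ltr_nat ltnS.
have := sn_pos (R:=R) m.
move: e1 e2 hsr; rewrite /J (NmB (an D C n x) (an D C m x)) (NmB (C (an D C n x)) (C (an D C m x))).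
move: (m.+1%:R^-1 : R) (n.+1%:R^-1 : R) => s r.
move: (Nm (an D C n x - x) ^+ 2) (Nm (an D C m x - x) ^+ 2) => ar asx.
have hd0 := sqr_ge0 (Nm (an D C m x - an D C n x)).
move: hd0; move: (Nm (an D C m x - an D C n x) ^+ 2) => d hd0.
have := sqr_ge0 (Nm (C (an D C m x) - C (an D C n x))).
move: (Nm (C (an D C m x) - C (an D C n x)) ^+ 2) => X.
move: (Nm (C (an D C m x)) ^+ 2) (Nm (C (an D C n x)) ^+ 2) => cs cr.
move=> hX e1 e2 hsr hs0.
have key : (r - s) * (cs - cr) = 2 * d + (r + s) * X by nra.
have hsX : 0 <= s * X by apply: mulr_ge0 => //; apply: ltW.
have : (r - s) * X <= (r - s) * (cs - cr) by nra.
by rewrite ler_pM2l // subr_gt0.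
Qed.
Lemma an_bounded {R : realType} {V : completeNormedModType R[i]} {ip : V -> V -> R[i]}
  (Hip : is_inner_product ip) {D : set V} {C : V -> V} (HCsa : self_adjoint ip D C) x (K : R) :
  (forall n, Nm (C (an D C n x)) <= K) -> D x /\ cv (fun n => C (an D C n x)) (C x).
Proof.
move=> hK.
set c := fun n => Nm (C (an D C n x)) ^+ 2.
have hcK : forall n, c n <= K ^+ 2.
  move=> n; have := hK n; have := Nm_ge0 (C (an D C n x)); rewrite /c.
  move: (Nm _) => q h1 h2; nra.
have hsup : has_sup (range c).
  split; first by exists (c 0%N); exists 0%N.
  by exists (K ^+ 2) => r [n _ <-].
have cy : cauchyV (fun n => C (an D C n x)).
  move=> e he.
  have he2 : 0 < e ^+ 2 by exact: exprn_gt0.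
  have [r [N _ <-] hN] := sup_adherent he2 hsup.
  have ub : forall n, c n <= sup (range c).
    by move=> n; apply: sup_upper_bound => //; exists n.
  have gen : forall n m, (N <= n)%N -> (n <= m)%N ->
      Nm (C (an D C m x) - C (an D C n x)) < e.
    move=> n m hn hnm; apply: sq_lt => //; first exact: Nm_ge0.
    have h1 := an_mono Hip HCsa _ _ x hnm.
    have h2 := an_mono Hip HCsa _ _ x hn.
    have h3 := sqr_ge0 (Nm (C (an D C n x) - C (an D C N x))).
    have := ub m; move: hN h1 h2 h3; rewrite /c.
    move: (Nm (C (an D C m x) - C (an D C n x)) ^+ 2) => A.
    move=> *; lra.
  exists N => n m hn hm.
  case: (leqP n m) => hnm; first by rewrite NmB; apply: gen.
  by apply: gen => //; apply: ltnW.
have [z hz] := complete_seq _ cy.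
have hyD : forall n, D (an D C n x) by move=> n; case: (anP Hip HCsa n x).
have [Dx Cxz] := C_closed Hip HCsa _ _ _ hyD (an_cv Hip HCsa x) hz.
by split => //; rewrite Cxz.
Qed.

Lemma D_char {R : realType} {V : completeNormedModType R[i]} {ip : V -> V -> R[i]}
  (Hip : is_inner_product ip) {D : set V} {C : V -> V} (HCsa : self_adjoint ip D C) x :
  D x <-> exists K : nat, forall n, Nm (C (an D C n x)) <= K%:R.
Proof.
split.
  move=> Dx; exists (Num.Def.trunc (Nm (C x))).+1 => n.
  apply: le_trans (an_boundD Hip HCsa n x Dx) _.
  exact: ltW (truncnS_gt _).
case=> K hK; exact: (an_bounded Hip HCsa x _ hK).1.
Qed.
Lemma L_bound {R : realType} {V : completeNormedModType R[i]} {D : set V} {C L : V -> V} :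
  bounded_from_graph D C L ->
  exists m : R, forall x, D x -> Nm (L x) ^+ 2 <= m ^+ 2 * (Nm x ^+ 2 + Nm (C x) ^+ 2).
Proof.
case=> _ [M [hM hb]].
exists (complex.Re M) => x Dx.
have := hb x Dx; rewrite /graph_norm2 !normE.
have hM' : M = (complex.Re M)%:C by rewrite RRe_real //; exact: ger0_real.
rewrite hM' -!rmorphXn -rmorphD -rmorphM lecR //.
Qed.

Lemma lipsq_Can {R : realType} {V : completeNormedModType R[i]} {ip : V -> V -> R[i]}
  (Hip : is_inner_product ip) {D : set V} {C : V -> V} (HCsa : self_adjoint ip D C) n x x' :
  Nm (C (an D C n x) - C (an D C n x')) ^+ 2 <= (2 * n.+1%:R^-1)^-1 * Nm (x - x') ^+ 2.
Proof.
have h := amin_lip Hip HCsa _ x x' (sn_pos n); rewrite -/(an D C n x) -/(an D C n x') in h.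
have hs := sn_pos (R:=R) n.
have h2 : 0 < 2 * (n.+1%:R^-1 : R) by rewrite mulr_gt0.
rewrite ler_pdivlMl //.
have := sqr_ge0 (Nm (an D C n x - an D C n x')).
move: h; move: (n.+1%:R^-1 : R) hs h2 => s hs h2.
move=> *; nra.
Qed.

Lemma lipsq_Lan {R : realType} {V : completeNormedModType R[i]} {ip : V -> V -> R[i]}
  (Hip : is_inner_product ip) {D : set V} {C : V -> V} (HCsa : self_adjoint ip D C) {L : V -> V}
  (HL : bounded_from_graph D C L) (m : R)
  (hm : forall x, D x -> Nm (L x) ^+ 2 <= m ^+ 2 * (Nm x ^+ 2 + Nm (C x) ^+ 2)) n x x' :
  Nm (L (an D C n x) - L (an D C n x')) ^+ 2 <=
    (m ^+ 2 * (1 + (2 * n.+1%:R^-1)^-1)) * Nm (x - x') ^+ 2.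
Proof.
have hsub := sa_sub HCsa; have hlin := sa_lin HCsa.
have [Da _] := anP Hip HCsa n x; have [Da' _] := anP Hip HCsa n x'.
have De : D (an D C n x - an D C n x') by apply: sub_sub.
have := hm _ De; rewrite (lin_sub hsub HL.1) // (lin_sub hsub hlin) //.
have h := amin_lip Hip HCsa _ x x' (sn_pos n); rewrite -/(an D C n x) -/(an D C n x') in h.
have hC := lipsq_Can Hip HCsa n x x'.
have hs := sn_pos (R:=R) n.
have hm2 := sqr_ge0 m.
have hq := sqr_ge0 (Nm (C (an D C n x) - C (an D C n x'))).
move: h hC; move: (n.+1%:R^-1 : R) hs => s hs.
move: (Nm (C (an D C n x) - C (an D C n x')) ^+ 2) hq => B hB.
move: (Nm (an D C n x - an D C n x') ^+ 2) => A.
move: (Nm (x - x') ^+ 2) => W.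
move: (Nm (L (an D C n x) - L (an D C n x')) ^+ 2) => Q.
move: (m ^+ 2) hm2 => k hk.
move: ((2 * s)^-1) => u.
move=> h1 h2 h3.
have hA : A <= W by nra.
nra.
Qed.

Lemma L_an_cv {R : realType} {V : completeNormedModType R[i]} {ip : V -> V -> R[i]}
  (Hip : is_inner_product ip) {D : set V} {C : V -> V} (HCsa : self_adjoint ip D C) {L : V -> V}
  (HL : bounded_from_graph D C L) (m : R)
  (hm : forall x, D x -> Nm (L x) ^+ 2 <= m ^+ 2 * (Nm x ^+ 2 + Nm (C x) ^+ 2)) x :
  D x -> cv (fun n => L (an D C n x)) (L x).
Proof.
move=> Dx.
have hsub := sa_sub HCsa; have hlin := sa_lin HCsa.
have [K hK] := (D_char Hip HCsa x).1 Dx.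
have [_ hCcv] := an_bounded Hip HCsa x _ hK.
move=> e he.
set k := `|m| + 1.
have hk : 0 < k by rewrite /k; have := normr_ge0 m; lra.
set d := e / (2 * k).
have hd : 0 < d by rewrite /d divr_gt0 // mulr_gt0.
have hkd : k * d = e / 2 by rewrite /d; field; apply/eqP; lra.
have [K1 h1] := an_cv Hip HCsa x d hd.
have [K2 h2] := hCcv d hd.
exists (maxn K1 K2) => n hn.
have g1 := h1 n (leq_trans (leq_maxl _ _) hn).
have g2 := h2 n (leq_trans (leq_maxr _ _) hn).
have [Da _] := anP Hip HCsa n x.
have De : D (an D C n x - x) by apply: sub_sub.
have := hm _ De; rewrite (lin_sub hsub HL.1) // (lin_sub hsub hlin) // => g3.
apply: sq_lt => //; first exact: Nm_ge0.
have hmk : m ^+ 2 <= k ^+ 2.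
  have -> : m ^+ 2 = `|m| ^+ 2 by rewrite -normrX ger0_norm ?sqr_ge0.
  rewrite /k; have := normr_ge0 m; move: `|m| => q hq; nra.
have a0 := Nm_ge0 (an D C n x - x); have b0 := Nm_ge0 (C (an D C n x) - C x).
move: g1 g2 g3 hmk a0 b0 hkd hk hd he; clearbody k d.
move: (Nm (an D C n x - x)) (Nm (C (an D C n x) - C x)) (Nm (L (an D C n x) - L x)) => A B Q.
move=> g1 g2 g3 hmk a0 b0 hkd hk hd he.
have hA : (k * A) ^+ 2 <= (k * d) ^+ 2 by rewrite ler_sqr ?nnegrE ?mulr_ge0 //; try lra; nra.
have hB : (k * B) ^+ 2 <= (k * d) ^+ 2 by rewrite ler_sqr ?nnegrE ?mulr_ge0 //; try lra; nra.
rewrite hkd in hA hB.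
have hsq : m ^+ 2 * (A ^+ 2 + B ^+ 2) <= k ^+ 2 * (A ^+ 2 + B ^+ 2).
  apply: ler_wpM2r => //; apply: addr_ge0; exact: sqr_ge0.
have e2 : 0 < e ^+ 2 by exact: exprn_gt0.
rewrite !exprMn in hA hB.
nra.
Qed.
Lemma ball_Nm {R : realType} {V : completeNormedModType R[i]} (x y : V) (r : R) :
  ball x r%:C y <-> Nm (x - y) < r.
Proof. by rewrite -ball_normE /= ltNm. Qed.

Lemma openNm {R : realType} {V : completeNormedModType R[i]} (O : set V) :
  (forall x, O x -> exists r : R, 0 < r /\ forall y, Nm (x - y) < r -> O y) -> open O.
Proof.
move=> h; rewrite openE => x Ox.
have [r [hr hO]] := h x Ox.
rewrite /interior; apply/nbhs_ballP; exists r%:C; first by rewrite /= ltcR.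
by move=> y /ball_Nm /hO.
Qed.

Lemma openNm_inv {R : realType} {V : completeNormedModType R[i]} (O : set V) :
  open O -> forall x, O x -> exists r : R, 0 < r /\ forall y, Nm (x - y) < r -> O y.
Proof.
rewrite openE => hO x Ox.
have := hO x Ox; rewrite /interior => /nbhs_ballP [r hr hb].
have [er hr'] := pos_complex _ hr.
exists (complex.Re r); split => // y hy; apply: hb.
by rewrite er ball_Nm.
Qed.

Lemma lipsq_open {R : realType} {V : completeNormedModType R[i]} (f : V -> V) (k : R) (O : set V) :
  (forall x y, Nm (f x - f y) ^+ 2 <= k * Nm (x - y) ^+ 2) -> open O -> open (f @^-1` O).
Proof.
move=> hf hO; apply: openNm => x Ox.
have [r [hr hb]] := openNm_inv _ hO _ Ox.
set K := `|k| + 1.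
have hK : 1 <= K by rewrite /K; have := normr_ge0 k; lra.
have hkK : k <= K by rewrite /K; have := real_ler_norm (num_real k); lra.
exists (r / K); split; first by rewrite divr_gt0 //; lra.
move=> y hy; apply: hb; rewrite /preimage /=.
apply: sq_lt => //; first exact: Nm_ge0.
have hK0 : 0 < K by lra.
have h1 : K * Nm (x - y) < r by rewrite mulrC -ltr_pdivlMr.
have h0 := Nm_ge0 (x - y).
have := hf x y.
clearbody K.
move: (Nm (f x - f y)) (Nm (x - y)) h1 h0 => a b h1 h0 h2.
have hKb : 0 <= K * b by apply: mulr_ge0 => //; lra.
have e1 : (K * b) ^+ 2 < r ^+ 2 by rewrite ltr_sqr ?nnegrE //; lra.
have b2 := sqr_ge0 b.
have e2 : k * b ^+ 2 <= K ^+ 2 * b ^+ 2.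
  apply: ler_wpM2r => //; nra.
rewrite exprMn in e1; lra.
Qed.

Lemma open_gtNm {R : realType} {V : completeNormedModType R[i]} (K : R) :
  open [set y : V | K < Nm y].
Proof.
apply: openNm => x /= hx; exists (Nm x - K); split; first lra.
move=> y hy.
have := NmD (x - y) y; rewrite subrK; lra.
Qed.

Lemma open_nearcompl {R : realType} {V : completeNormedModType R[i]} (U : set V) (r : R) :
  open [set y : V | exists z, ~ U z /\ Nm (y - z) < r].
Proof.
apply: openNm => x [z [hz hxz]]; exists (r - Nm (x - z)); split; first lra.
move=> y hy; exists z; split => //.
have := NmD (y - x) (x - z).
have -> : y - x + (x - z) = y - z by rewrite addrA subrK.
rewrite (NmB y x); lra.
Qed.

Lemma borel_open {T : topologicalType} (A : set T) : open A -> borel_sets A.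
Proof. by move=> hA; apply: sub_sigma_algebra. Qed.

Lemma borel_C {T : topologicalType} (A : set T) : borel_sets A -> borel_sets (~` A).
Proof. by move=> hA; rewrite -setTD; apply: sigma_algebraCD. Qed.

Lemma borel_bigcup {T : topologicalType} (A : (set T)^nat) :
  (forall n, borel_sets (A n)) -> borel_sets (\bigcup_n A n).
Proof. exact: sigma_algebra_bigcup. Qed.

Lemma borel_bigcap {T : topologicalType} (A : (set T)^nat) :
  (forall n, borel_sets (A n)) -> borel_sets (\bigcap_n A n).
Proof.
move=> h; rewrite -[X in borel_sets X]setCK setC_bigcap; apply: borel_C.
by apply: borel_bigcup => n; apply: borel_C.
Qed.

Lemma borel_U {T : topologicalType} (A B : set T) :
  borel_sets A -> borel_sets B -> borel_sets (A `|` B).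
Proof.
move=> hA hB; rewrite -bigcup2E; apply: borel_bigcup => -[|[|n]] //=.
exact: sigma_algebra0.
Qed.

Lemma borel_I {T : topologicalType} (A B : set T) :
  borel_sets A -> borel_sets B -> borel_sets (A `&` B).
Proof.
move=> hA hB; rewrite -[X in borel_sets X]setCK setCI; apply: borel_C.
by apply: borel_U; apply: borel_C.
Qed.

Lemma borel_T {T : topologicalType} : borel_sets [set: T].
Proof. by rewrite -setC0; apply: borel_C; apply: sigma_algebra0. Qed.

Lemma borel_const {T : topologicalType} (P : Prop) : borel_sets [set _ : T | P].
Proof.
case: (pselect P) => hP.
  by rewrite (_ : [set _ | P] = setT); [exact: borel_T | apply/seteqP; split].
by rewrite (_ : [set _ | P] = set0); [exact: sigma_algebra0 | apply/seteqP; split].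
Qed.

Lemma borel_measurableP {T U : topologicalType} (f : T -> U) :
  (forall O, open O -> borel_sets (f @^-1` O)) -> borel_measurable f.
Proof.
move=> h B hB.
have : sigma_algebra setT [set B | borel_sets (f @^-1` B)].
  split => /=.
  - by rewrite preimage_set0; apply: sigma_algebra0.
  - by move=> A hA; rewrite setTD preimage_setC; apply: borel_C.
  - by move=> A hA; rewrite preimage_bigcup; apply: borel_bigcup.
move=> hs; exact: (smallest_sub hs h hB).
Qed.
Theorem lemma5p2 (R : realType) (V : completeNormedModType R[i])
    (ip : V -> V -> R[i]) (Hip : is_inner_product ip) (Hsep : separable_space V)
    (D : set V) (C : V -> V) (HCsa : self_adjoint ip D C) (HCpos : positive_op ip D C)
    (L : V -> V) (HL : bounded_from_graph D C L) :
  borel_measurable (L \o pi_dom D).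
Proof.
have [m hm] := L_bound HL.
apply: borel_measurableP => U hU.
set O := fun k : nat => [set y : V | exists z, ~ U z /\ Nm (y - z) < k.+1%:R^-1].
set G := \bigcup_k \bigcup_N \bigcap_j
   ((fun x => L (an D C (N + j) x)) @^-1` (~` O k)).
set DD := \bigcup_K \bigcap_n
   (~` ((fun x => C (an D C n x)) @^-1` [set y : V | K%:R < Nm y])).
have DDe : DD = D.
  apply/seteqP; split => x /=.
    case=> K _ hK; apply/(D_char Hip HCsa x); exists K => n.
    have := hK n I; rewrite /preimage /= => h; rewrite leNgt; apply/negP => h'; exact: h h'.
  move=> /(D_char Hip HCsa x) [K hK]; exists K => // n _.
  rewrite /preimage /= => h; have := hK n; rewrite leNgt h //.
have hG : forall x, D x -> (U (L x) <-> G x).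
  move=> x Dx; split.
    move=> ULx.
    have [r [hr hb]] := openNm_inv _ hU _ ULx.
    have [k hk] := inv_small (r / 2) (divr_gt0 hr (ltr0n _ 2)).
    have [N hN] := L_an_cv Hip HCsa HL m hm x Dx _ (divr_gt0 hr (ltr0n _ 2)).
    exists k => //; exists N => // j _.
    rewrite /preimage /= => -[z [hz hd]]; apply: hz; apply: hb.
    have h1 := hN (N + j)%N (leq_addr _ _).
    have h2 := hk k (leqnn k).
    have := NmD (L x - L (an D C (N + j) x)) (L (an D C (N + j) x) - z).
    rewrite addrA subrK (NmB (L x)).
    move: h1 h2 hd; move: (k.+1%:R^-1 : R) => c.
    move=> *; lra.
  case=> k _ [N _ hN].
  apply/not_notP => hnU.
  have hk : (0 : R) < k.+1%:R^-1 by rewrite invr_gt0 ltr0n.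
  have [N' hN'] := L_an_cv Hip HCsa HL m hm x Dx _ hk.
  have := hN N' I; rewrite /preimage /=; apply.
  exists (L x); split => //.
  rewrite addnC; apply: hN'; exact: leq_addr.
have -> : (L \o pi_dom D) @^-1` U = (DD `&` G) `|` (~` DD `&` [set _ | U (L 0)]).
  rewrite DDe; apply/seteqP; split => x /=; rewrite /pi_dom.
    case: (pselect (D x)) => Dx hx.
      by left; split => //; apply/(hG x Dx).
    by right.
  move=> hx; case: (pselect (D x)) => Dx.
    by case: hx => [[_ Gx]|[nDx _]] //; exact/(hG x Dx).
  by case: hx => [[Dx' _]|[_ h]].
have hs : forall n, 0 < (2 * n.+1%:R^-1 : R) by move=> n; rewrite mulr_gt0 // invr_gt0 ltr0n.
have DDb : borel_sets DD.
  apply: borel_bigcup => K; apply: borel_bigcap => n; apply: borel_C; apply: borel_open.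
  apply: (lipsq_open _ ((2 * n.+1%:R^-1)^-1)); last exact: open_gtNm.
  move=> x y /=; have h := lipsq_Can Hip HCsa n x y; exact h.
have Gb : borel_sets G.
  apply: borel_bigcup => k; apply: borel_bigcup => N; apply: borel_bigcap => j.
  rewrite preimage_setC; apply: borel_C; apply: borel_open.
  have hl := lipsq_Lan Hip HCsa HL m hm (N + j)%N.
  have := lipsq_open (fun x => L (an D C (N + j) x)) _ (O k) hl (open_nearcompl U _).
  by [].
apply: borel_U; first exact: borel_I.
apply: borel_I; [exact: borel_C | exact: borel_const].
Qed.
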